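(* Let $G$ be a $2$-connected cubic multigraph, let $H\neq G$ be a peninsula of $G$, and let $e=ab$ be the external port of $H$. Then there exists an $a$-$b$-path in $G$ all of whose internal vertices lie in $V(H)$ and whose length is at least $2\log|H|-2\log\log|H|-8$ (with $\log=\log_2$).
   Context: Multigraphs are finite and loopless, parallel edges allowed; $|H|$ is the number of vertices. A cut of $G$ is a bipartition $(U,V(G)\setminus U)$; its cut-set is the set of edges between the sides. A tombolo-cut is a cut whose cut-set (the tombolo) has exactly $2$ edges. For a tombolo-cut with tombolo $\{a_1b_1,a_2b_2\}$, $a_1,a_2\in U$, the pairs $\{a_1,a_2\}$ and $\{b_1,b_2\}$ are its port-pairs. A virtual subgraph of $G$ is a multigraph $H$ with $V(H)\subseteq V(G)$ whose edges are all edges of $G$ with both ends in $V(H)$ (real edges) plus one (possibly parallel) virtual edge $ab$ for every port-pair $\{a,b\}\subseteq V(H)$ of a tombolo both of whose edges are not in $E(H)$. A peninsula is a virtual subgraph $H$ such that $(V(H),V(G)\setminus V(H))$ is a tombolo-cut, or $H=G$. If $H\ne G$ is a peninsula with tombolo $\{a_1b_1,a_2b_2\}$, $a_1,a_2\in V(H)$, then its external port is the edge $b_1b_2$ (the virtual edge it creates in virtual subgraphs on the other side). *)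

(* Defs.v *)
From mathcomp Require Import all_boot.
From Stdlib Require Import Reals.

Set Implicit Arguments.
Unset Strict Implicit.
Unset Printing Implicit Defensive.

Section Multigraph.
Variables (V E : finType) (ends : E -> V * V).

Definition loopless : Prop := forall e : E, (ends e).1 != (ends e).2.

Definition incident (v : V) (e : E) : bool := ((ends e).1 == v) || ((ends e).2 == v).

(* degree of v (no loops, so every incident edge counts once) *)
Definition degree (v : V) : nat := #|[set e | incident v e]|.

Definition cubic : Prop := forall v : V, degree v = 3.

Definition adj : rel V :=
  fun u v => [exists e : E, (ends e == (u, v)) || (ends e == (v, u))].

Definition connected_in (S : {set V}) : Prop :=
  forall u v, u \in S -> v \in S ->
    connect [rel x y | [&& adj x y, x \in S & y \in S]] u v.

(* 2-connected (Diestel): more than 2 vertices, and G - X connected for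
   every X with |X| < 2. *)
Definition two_connected : Prop :=
  2 < #|V| /\ connected_in setT /\ forall x : V, connected_in (setT :\ x).

Definition cutset (U : {set V}) : {set E} :=
  [set e | ((ends e).1 \in U) != ((ends e).2 \in U)].

(* endpoint of e lying outside U (meaningful for e in the cut-set of U) *)
Definition outer_end (U : {set V}) (e : E) : V :=
  if (ends e).1 \in U then (ends e).2 else (ends e).1.

(* p is the list of internal vertices of an a-b-path in G:
   the vertex sequence a :: p ++ [b] is a walk with pairwise distinct vertices. *)
Definition is_path (a : V) (p : seq V) (b : V) : Prop :=
  path adj a (rcons p b) /\ uniq (a :: rcons p b).

Definition path_length (p : seq V) : nat := (size p).+1.

End Multigraph.

Definition log2 (x : R) : R := (ln x / ln 2)%R.

(* Main.v *)
Require Import Defs.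
From mathcomp Require Import all_boot.
From Stdlib Require Import Reals.
From Stdlib Require Import Lra Classical.
From mathcomp Require Import zify.

Set Implicit Arguments.
Unset Strict Implicit.
Unset Printing Implicit Defensive.

Section Gen.
Variables (V E : finType) (ends : E -> V * V).
Hypothesis Hll : loopless ends.

Lemma adjC x y : adj ends x y = adj ends y x.
Proof.
by apply/existsP/existsP => -[e He]; exists e; rewrite orbC.
Qed.

Lemma adj_irr x : ~~ adj ends x x.
Proof.
apply/existsP => -[e]; rewrite orbb => /eqP He.
by move: (Hll e); rewrite He eqxx.
Qed.

Definition nbr (y : V) : {set V} := [set z | adj ends y z].

Definition other (y : V) (e : E) : V :=
  if (ends e).1 == y then (ends e).2 else (ends e).1.

Lemma nbr_sub y : nbr y \subset other y @: [set e | incident ends y e].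
Proof.
apply/subsetP => z; rewrite inE => /existsP[e He].
apply/imsetP; exists e.
  rewrite inE /incident.
  by case/orP: He => /eqP -> /=; rewrite eqxx ?orbT.
rewrite /other; case/orP: He => /eqP -> /=; rewrite ?eqxx //.
by case: eqP.
Qed.

Lemma nbr_card y : cubic ends -> #|nbr y| <= 3.
Proof.
move=> Hc; apply: leq_trans (subset_leq_card (nbr_sub y)) _.
by apply: leq_trans (leq_imset_card _ _) _; rewrite -/(degree ends y) Hc.
Qed.

Lemma nbr_card2 x y : cubic ends -> adj ends y x -> #|nbr y :\ x| <= 2.
Proof.
move=> Hc Hyx; have := nbr_card y Hc; rewrite (cardsD1 x) inE Hyx.
by rewrite add1n ltnS.
Qed.

Lemma card_bigcup_le (X Y : finType) (A : {set X}) (F : X -> {set Y}) :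
  #|\bigcup_(p in A) F p| <= \sum_(p in A) #|F p|.
Proof.
elim/big_rec2: _ => [|p S n _ IH]; first by rewrite cards0.
by apply: leq_trans (leq_card_setU _ _) _; rewrite leq_add2l.
Qed.

Fixpoint T (s : V) (i : nat) : {set V * V} :=
  match i with
  | 0 => [set (s, s)]
  | i'.+1 => \bigcup_(p in T s i') [set (p.2, z) | z in nbr p.2 :\ p.1]
  end.

Lemma TS s i : T s i.+1 = \bigcup_(p in T s i) [set (p.2, z) | z in nbr p.2 :\ p.1].
Proof. by []. Qed.

Lemma T_adj s i p : p \in T s i.+1 -> adj ends p.1 p.2.
Proof.
rewrite TS => /bigcupP[q _ /imsetP[z]]; rewrite !inE => /andP[_ Hz] ->.
by [].
Qed.

Lemma T_card s i : cubic ends -> #|T s i| <= expn 2 i.+1.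
Proof.
move=> Hc.
have H1 : #|T s 1| <= 4.
  rewrite TS; apply: leq_trans (card_bigcup_le _ _) _.
  rewrite big_set1 /=; apply: leq_trans (leq_imset_card _ _) _.
  apply: leq_trans (subset_leq_card (subD1set _ _)) _.
  by apply: leq_trans (nbr_card s Hc) _.
case: i => [|i]; first by rewrite cards1.
elim: i => [|i IH]; first by [].
rewrite TS; apply: leq_trans (card_bigcup_le _ _) _.
apply: (@leq_trans (\sum_(p in T s i.+1) 2)).
  apply: leq_sum => p Hp; apply: leq_trans (leq_imset_card _ _) _.
  by apply: nbr_card2 => //; rewrite adjC; apply: T_adj Hp.
rewrite sum_nat_const.
have -> : expn 2 i.+3 = expn 2 i.+2 + expn 2 i.+2 by rewrite expnS mul2n -addnn.
rewrite muln2 -addnn.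
by apply: leq_add.
Qed.

Definition Reach s i : {set V} := [set p.2 | p in T s i].

Lemma reach_card s i : cubic ends -> #|Reach s i| <= expn 2 i.+1.
Proof. by move=> Hc; apply: leq_trans (leq_imset_card _ _) (T_card s i Hc). Qed.

Lemma reach_path x r : path (adj ends) x r -> uniq (x :: r) ->
  last x r \in Reach x (size r).
Proof.
suff: path (adj ends) x r -> uniq (x :: r) ->
  exists2 y, y \in x :: r & (y, last x r) \in T x (size r).
  by move=> H Hp Hu; have [y _ Hy] := H Hp Hu; apply/imsetP; exists (y, last x r).
elim/last_ind: r => [|r z IH]; first by exists x; rewrite ?inE.
rewrite rcons_path -rcons_cons rcons_uniq => /andP[Hp Ha] /andP[Hz Hu].
have [y Hy HT] := IH Hp Hu.
exists (last x r); first by rewrite mem_rcons inE mem_last orbT.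
rewrite last_rcons size_rcons TS; apply/bigcupP; exists (y, last x r) => //.
apply/imsetP; exists z => //; rewrite !inE Ha andbT.
by apply: contraNneq Hz => ->.
Qed.
End Gen.



Lemma INR_expn2 k : INR (expn 2 k) = pow 2 k.
Proof.
elim: k => [|k IH]; first by rewrite expn0 /=.
rewrite expnS -multE mult_INR IH /=; lra.
Qed.

Lemma ln_le' (x y : R) : (0 < x)%R -> (x <= y)%R -> (ln x <= ln y)%R.
Proof.
move=> Hx [Hxy|->]; last by right.
by left; apply: ln_increasing.
Qed.

Lemma ln0 : ln 0 = 0%R.
Proof. unfold ln; destruct (Rlt_dec 0 0) as [H|H]; [destruct (Rlt_irrefl 0 H)|reflexivity]. Qed.

Lemma real_bound (n l : nat) : (1 <= n)%N -> (n * n <= expn 2 (l + 5))%N ->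
  (INR l >= 2 * log2 (INR n) - 2 * log2 (log2 (INR n)) - 8)%R.
Proof.
move=> Hn Hle.
have Hn0 : (0 < INR n)%R by apply: lt_0_INR; apply/ltP.
have Hln2 : (0 < ln 2)%R by rewrite -ln_1; apply: ln_increasing; lra.
have H1 : (2 * ln (INR n) <= INR (l + 5) * ln 2)%R.
  rewrite -ln_pow; last lra.
  have -> : (2 * ln (INR n) = ln (INR n * INR n))%R by rewrite ln_mult //; lra.
  apply: ln_le'; first by apply: Rmult_lt_0_compat.
  rewrite -INR_expn2 -mult_INR multE; apply: le_INR; exact/leP.
have H2 : (2 * log2 (INR n) <= INR l + 5)%R.
  rewrite -plusE plus_INR in H1; have H5 : INR 5 = 5%R by simpl; lra.
  rewrite H5 in H1; rewrite /log2 /Rdiv.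
  have -> : (2 * (ln (INR n) * / ln 2) = (2 * ln (INR n)) * / ln 2)%R by ring.
  apply: (Rmult_le_reg_r (ln 2)) => //.
  rewrite Rmult_assoc Rinv_l; [rewrite Rmult_1_r; lra | lra].
have H3 : (0 <= log2 (log2 (INR n)))%R.
  case: (ltnP 1 n) => Hn1.
    have Hl1 : (1 <= log2 (INR n))%R.
      rewrite /log2; apply/(Rmult_le_reg_r (ln 2)) => //.
      rewrite Rmult_assoc Rinv_l; last lra.
      rewrite Rmult_1_r Rmult_1_l; apply: ln_le'; first lra.
      have -> : 2%R = INR 2 by simpl; lra.
      by apply: le_INR; apply/leP.
    rewrite /log2; apply: Rmult_le_pos; last by left; apply: Rinv_0_lt_compat.
    rewrite -ln_1; apply: ln_le'; [lra | exact: Hl1].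
  have -> : n = 1%N by apply/eqP; rewrite eqn_leq Hn Hn1.
  rewrite /log2 /= ln_1 /Rdiv Rmult_0_l ln0 Rmult_0_l; lra.
lra.
Qed.

Lemma crossing (V : eqType) (r : rel V) (P : V -> Prop) x p :
  path r x p -> P x -> ~ P (last x p) -> exists x' y', r x' y' /\ P x' /\ ~ P y'.
Proof.
elim: p x => [|y p IH] x /=; first by move=> _ H H'.
case/andP=> Hxy Hp Px Hl.
case: (classic (P y)) => Py; first exact: IH Hp Py Hl.
by exists x, y.
Qed.

Section Pen.
Variables (V E : finType) (ends : E -> V * V) (U : {set V}) (e1 e2 : E).
Hypotheses (Hll : loopless ends) (Hcub : cubic ends) (H2c : two_connected ends)
  (Hcut : cutset ends U = [set e1; e2]).
Local Notation adj := (adj ends).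

Definition rR (S : {set V}) := [rel x y | [&& adj x y, x \in S & y \in S]].

Lemma path_rR S x p : path (rR S) x p -> path adj x p /\ all (mem S) p.
Proof.
elim: p x => [|y p IH] x //= /andP[/and3P[Ha _ Hy] /IH[H1 H2]].
by rewrite Ha Hy H1 H2.
Qed.

Definition inner (e : E) := if (ends e).1 \in U then (ends e).1 else (ends e).2.
Definition a1 := inner e1.
Definition a2 := inner e2.
Definition b1 := outer_end ends U e1.
Definition b2 := outer_end ends U e2.

Lemma cut_edge e : e \in [set e1; e2] ->
  [&& inner e \in U, outer_end ends U e \notin U & adj (inner e) (outer_end ends U e)].
Proof.
rewrite -Hcut /cutset inE /inner /outer_end.
case E1: ((ends e).1 \in U); case E2: ((ends e).2 \in U) => //= _.
  rewrite E1 /=; apply/existsP; exists e; by case: (ends e) => u v /= ; rewrite eqxx.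
rewrite E1 /=; apply/existsP; exists e; by case: (ends e) => u v /= ; rewrite eqxx orbT.
Qed.

Lemma a1U : a1 \in U. Proof. by case/and3P: (cut_edge (set21 e1 e2)). Qed.
Lemma a2U : a2 \in U. Proof. by case/and3P: (cut_edge (set22 e1 e2)). Qed.
Lemma b1U : b1 \notin U. Proof. by case/and3P: (cut_edge (set21 e1 e2)). Qed.
Lemma b2U : b2 \notin U. Proof. by case/and3P: (cut_edge (set22 e1 e2)). Qed.
Lemma adj1 : adj a1 b1. Proof. by case/and3P: (cut_edge (set21 e1 e2)). Qed.
Lemma adj2 : adj a2 b2. Proof. by case/and3P: (cut_edge (set22 e1 e2)). Qed.

Lemma cut_pair x y : adj x y -> x \in U -> y \notin U ->
  (x = a1 /\ y = b1) \/ (x = a2 /\ y = b2).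
Proof.
move=> /existsP[e He] Hx Hy.
have He' : e \in [set e1; e2].
  rewrite -Hcut /cutset inE.
  by case/orP: He => /eqP -> /=; rewrite Hx (negbTE Hy).
suff: inner e = x /\ outer_end ends U e = y.
  by case/set2P: He' => -> [<- <-]; [left|right].
rewrite /inner /outer_end.
by case/orP: He => /eqP -> /=; rewrite ?Hx ?(negbTE Hy).
Qed.

Lemma third_nb v : exists c, adj v c /\ (c \in U) = (v \in U).
Proof.
have : ~~ ([set e | incident ends v e] \subset [set e1; e2]).
  apply/negP => /subset_leq_card; rewrite -/(degree ends v) Hcub cards2.
  by case: (e1 != e2).
case/subsetPn => e3; rewrite inE => Hi Hn.
have Hc : ((ends e3).1 \in U) = ((ends e3).2 \in U).
  by move: Hn; rewrite -Hcut /cutset inE negbK => /eqP.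
move: Hi; rewrite /incident.
case E1: ((ends e3).1 == v).
  move/eqP: E1 => E1 _; exists (ends e3).2; rewrite -E1 Hc; split => //.
  by apply/existsP; exists e3; case: (ends e3) => ? ? /=; rewrite eqxx.
move=> /= /eqP E2; exists (ends e3).1; rewrite -E2 Hc; split => //.
by apply/existsP; exists e3; case: (ends e3) => ? ? /=; rewrite eqxx orbT.
Qed.

Lemma conn_minus x u v : u != x -> v != x -> connect (rR (setT :\ x)) u v.
Proof.
by move=> Hu Hv; case: H2c => _ [_ H]; apply: H; rewrite !inE ?Hu ?Hv.
Qed.

Lemma conn_all u v : connect (rR setT) u v.
Proof. by case: H2c => _ [H _]; apply: H; rewrite !inE. Qed.

Lemma a12 : a1 != a2.
Proof.
apply/eqP => Ha.
have [c [Hac HcU]] := third_nb a1.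
rewrite a1U in HcU.
have Hca : c != a1 by apply: contraTneq Hac => ->; exact: adj_irr.
have Hba : b1 != a1 by apply: contraNneq b1U => ->; exact: a1U.
have /connectP[p Hp Hl] := conn_minus Hca Hba.
have Hl' : ~ (last c p \in U) by rewrite -Hl; apply/negP; exact: b1U.
have [x [y [Hr [Hx Hy]]]] := crossing (P := fun z => z \in U) Hp HcU Hl'.
move: Hr => /= /and3P[Hxy]; rewrite !inE => /andP[Hxa _] _.
move/negP: Hy => Hy.
by case: (cut_pair Hxy Hx Hy) => -[Hx' _]; move: Hxa; rewrite Hx' ?Ha eqxx.
Qed.

Lemma b12 : b1 != b2.
Proof.
apply/eqP => Hb.
have [c [Hbc HcU]] := third_nb b1.
rewrite (negbTE b1U) in HcU.
have Hcb : c != b1 by apply: contraTneq Hbc => ->; exact: adj_irr.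
have Hab : a1 != b1 by apply: contraTneq a1U => ->; exact: b1U.
have /connectP[p Hp Hl] := conn_minus Hcb Hab.
have Hc' : c \notin U by rewrite HcU.
have Hl' : ~ (last c p \notin U) by rewrite -Hl a1U.
have [x [y [Hr [Hx Hy]]]] := crossing (P := fun z => z \notin U) Hp Hc' Hl'.
move: Hr => /= /and3P[Hxy]; rewrite !inE => /andP[Hxb _] _.
move/negP: Hy; rewrite negbK => Hy.
rewrite adjC in Hxy.
by case: (cut_pair Hxy Hy Hx) => -[_ Hx']; move: Hxb; rewrite Hx' ?Hb eqxx.
Qed.

Definition hp s t (L : seq V) : Prop :=
  [/\ sorted adj L, uniq L, all (mem U) L, L = s :: behead L & last s L = t].

Lemma hp_rev s t L : hp s t L -> hp t s (rev L).
Proof.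
case=> Hs Hu Ha HL Hl; move: HL Hs Hu Ha Hl.
case: L => [|x q] //= [->] Hs Hu Ha Hl; split.
- rewrite rev_sorted /=; apply: sub_path Hs => x' y; by rewrite /= adjC.
- by rewrite rev_uniq.
- by rewrite all_rev.
- by rewrite lastI rev_rcons Hl.
- by rewrite rev_cons last_rcons.
Qed.

Lemma sorted_catC (A Y : seq V) x :
  sorted adj (A ++ x :: Y) = sorted adj (rcons A x) && path adj x Y.
Proof.
case: A => [|z A] //=.
by rewrite cat_path rcons_path /= andbA.
Qed.

Lemma uniq_insert (X M Y : seq V) : uniq (X ++ Y) -> uniq M ->
  (forall z, z \in M -> z \notin X ++ Y) -> uniq (X ++ M ++ Y).
Proof.
rewrite !cat_uniq => /and3P[HX HXY HY] HM Hd.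
rewrite HX HM HY has_cat negb_or HXY /= !andbT.
apply/andP; split; apply/hasPn => z Hz.
  by apply/negP => HzX; move: (Hd z Hz); rewrite mem_cat HzX.
by apply/negP => HzM; move: (Hd z HzM); rewrite mem_cat Hz orbT.
Qed.

Lemma head_same s (A X Y : seq V) : A != [::] ->
  A ++ X = s :: behead (A ++ X) -> A ++ Y = s :: behead (A ++ Y).
Proof. by case: A => [|z A] //= _ [->]. Qed.

Lemma reroute s t L A u B y v w : hp s t L -> L = rcons A u ++ B -> y \in B ->
  adj u v -> path adj v (rcons w y) -> uniq (v :: w) -> all (mem U) (v :: w) ->
  ~~ has (mem L) (v :: w) -> exists L', hp s t L' /\ v \in L'.
Proof.
move=> [Hs Hu Ha HL Hl] HLe HyB Huv Hp HuM HaM HdM.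
case/splitPr: HyB HLe => B1 B2 HLe.
exists (rcons A u ++ (v :: w) ++ y :: B2); split; last first.
  by rewrite mem_cat mem_head orbT.
have HLe' := HLe.
split.
- move: Hs; rewrite HLe' !cat_rcons !sorted_catC => /andP[-> H] /=.
  rewrite Huv -cat_rcons cat_path Hp last_rcons /=.
  by move: H; rewrite cat_path /= => /and3P[].
- apply: uniq_insert => //.
  + apply: subseq_uniq Hu; rewrite HLe'.
    by apply: cat_subseq (subseq_refl _) (suffix_subseq _ _).
  + move=> z Hz; apply/negP => Hz'.
    have : z \in L.
      rewrite HLe' !mem_cat; move: Hz'; rewrite mem_cat => /orP[->//|->].
      by rewrite !orbT.
    by move=> HzL; move/hasPn: HdM => /(_ z Hz) /negP H; apply: H.
- move: Ha; rewrite HLe' !all_cat => /and3P[-> _ /= ->]; by move: HaM => /= ->.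
- apply: (head_same (X := B1 ++ y :: B2)); first by case: (A).
  by rewrite -HLe'.
- by move: Hl; rewrite HLe' !last_cat.
Qed.

Lemma confineA x p : path adj x p -> x \in U ->
  all (fun z => (z != a1) && (z != a2)) (x :: p) -> all (mem U) p.
Proof.
elim: p x => [|y p IH] x //= /andP[Hxy Hp] HxU /andP[/andP[Hx1 Hx2] Ha].
have HyU : y \in U.
  apply/negPn/negP => HyU.
  by case: (cut_pair Hxy HxU HyU) => -[Hx _]; move: Hx1 Hx2; rewrite Hx eqxx ?andbF.
by rewrite HyU (IH y Hp HyU Ha).
Qed.

Lemma split_at (x : V) s : x \in s -> exists A B, s = rcons A x ++ B.
Proof. by case/splitPr => A B; exists A, B; rewrite cat_rcons. Qed.

Lemma step s t L u v : hp s t L -> a1 \in L -> a2 \in L -> u \in L -> v \in U ->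
  adj u v -> v \notin L -> exists L', hp s t L' /\ v \in L'.
Proof.
move=> Hhp H1L H2L HuL HvU Huv HvL.
set t0 := if u == a1 then a2 else a1.
have Ht0L : t0 \in L by rewrite /t0; case: ifP.
have Ht0u : t0 != u.
  rewrite /t0; case: (u =P a1) => [->|Hne]; first by rewrite eq_sym a12.
  by rewrite eq_sym; apply/eqP.
have Hvu : v != u by apply: contraNneq HvL => ->.
have /connectP[p0 Hp0 Hl0] := conn_minus Hvu Ht0u.
case: (shortenP Hp0) Hl0 => p' Hp' Hu' _ Hl0.
have [Hpa Hpall] := path_rR Hp'.
have Hhas : has (mem L) p'.
  apply/hasP; exists t0 => //.
  have : last v p' \in v :: p' by apply: mem_last.
  rewrite -Hl0 inE => /orP[/eqP Ht0v|//].
  by move: HvL; rewrite -Ht0v Ht0L.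
move: Hpa Hpall Hu'; case: (split_find_nth v Hhas) => y w w2 HyL Hw Hpa Hpall Hu'.
move: Hpa; rewrite cat_path => /andP[Hpy _].
have Huw : uniq (v :: w).
  apply: subseq_uniq Hu'; rewrite -cat_cons; apply: subseq_trans (prefix_subseq _ _) .
  rewrite -rcons_cons; exact: subseq_rcons.
have Hyu : y != u.
  move: Hpall; rewrite all_cat all_rcons => /andP[/andP[]]; by rewrite !inE andbT.
have HdM : ~~ has (mem L) (v :: w) by rewrite /= negb_or HvL.
have HaM : all (mem U) (v :: w).
  rewrite /= HvU /=; apply: confineA HvU _.
    by move: Hpy; rewrite rcons_path => /andP[].
  apply/allP => z Hz; apply/andP; split; apply: contraNneq HdM => Hz1;
    apply/hasP; exists z => //; by rewrite Hz1.
have [A [B HLe]] := split_at HuL.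
have : y \in L by [].
rewrite HLe mem_cat mem_rcons inE (negbTE Hyu) /= => /orP[HyA|HyB].
  have Hhr := hp_rev Hhp.
  have HLr : rev L = rcons (rev B) u ++ rev A.
    by rewrite HLe rev_cat rev_rcons cat_rcons.
  have HdM' : ~~ has (mem (rev L)) (v :: w).
    by rewrite (eq_has (a2 := mem L)) // => z; rewrite /= mem_rev.
  have HyA' : y \in rev A by rewrite mem_rev.
  have [L' [HL' HvL']] := reroute Hhr HLr HyA' Huv Hpy Huw HaM HdM'.
  by exists (rev L'); split; [apply: hp_rev | rewrite mem_rev].
exact: reroute Hhp HLe HyB Huv Hpy Huw HaM HdM.
Qed.

Lemma hp_mem s t L : hp s t L -> s \in L /\ t \in L.
Proof.
case=> _ _ _ HL Hl; have Hs : s \in L by rewrite HL mem_head.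
split => //; have := mem_last s L; rewrite Hl inE => /orP[/eqP->|] //.
Qed.

Lemma avoid_ends X : uniq (a1 :: rcons X a2) ->
  all (fun z => (z != a1) && (z != a2)) X.
Proof.
rewrite /= mem_rcons inE rcons_uniq => /andP[/norP[_ H1] /andP[H2 _]].
apply/allP => z Hz; apply/andP; split.
  by apply: contraNneq H1 => <-.
by apply: contraNneq H2 => <-.
Qed.

Lemma init_path : exists L, hp a1 a2 L.
Proof.
have H1 : a1 != b1 by apply: contraTneq a1U => ->; exact: b1U.
have H2 : a2 != b1 by apply: contraTneq a2U => ->; exact: b1U.
have /connectP[p0 Hp0 Hl0] := conn_minus H1 H2.
case: (shortenP Hp0) Hl0 => p Hp Hu _ Hl.
have [Hpa Hpall] := path_rR Hp.
exists (a1 :: p); split => //.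
move: Hp Hu Hpa Hpall Hl; case/lastP: p => [|X z].
  by move=> _ _ _ _ /= Ha; move: a12; rewrite Ha eqxx.
rewrite last_rcons => _ Hu Hpa Hpall Hz; rewrite -Hz in Hu Hpa Hpall *.
apply/andP; split; first exact: a1U.
change (all (mem U) (rcons X a2)); rewrite all_rcons; apply/andP; split; first exact: a2U.
move: Hu Hpa Hpall; case: X => [|y X] //= Hu /andP[Hy Hpa].
move=> /andP[]; rewrite !inE andbT => Hyb _.
have HyU : y \in U.
  apply/negPn/negP => HyU.
  case: (cut_pair Hy a1U HyU) => -[Ha Hb].
    by move: Hyb; rewrite Hb eqxx.
  by move: a12; rewrite Ha eqxx.
rewrite HyU /=; apply: confineA HyU _ => //.
  by move: Hpa; rewrite rcons_path => /andP[].
exact: (avoid_ends (X := y :: X) Hu).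
Qed.

Lemma all_good w : w \in U -> exists L, hp a1 a2 L /\ w \in L.
Proof.
move=> HwU; apply: NNPP => Hng.
have [L0 HL0] := init_path.
have /connectP[p Hp Hl] := conn_all a1 w.
pose P := fun z => z \notin U \/ exists L, hp a1 a2 L /\ z \in L.
have Pa1 : P a1 by right; exists L0; split => //; case: (hp_mem HL0).
have Pw : ~ P (last a1 p).
  by rewrite -Hl; case => [|//]; rewrite HwU.
have [x [y [Hxy [Px Py]]]] := crossing Hp Pa1 Pw.
move: Hxy => /and3P[Hxy _ _].
have HyU : y \in U by apply/negPn/negP => H; apply: Py; left.
have Hng' : ~ exists L, hp a1 a2 L /\ y \in L by move=> H; apply: Py; right.
case: Px => [HxU | [L [HL HxL]]].
  rewrite adjC in Hxy; apply: Hng'; exists L0; split => //.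
  by case: (cut_pair Hxy HyU HxU) => -[-> _]; case: (hp_mem HL0).
case: (boolP (y \in L)) => HyL; first by apply: Hng'; exists L.
have [H1 H2] := hp_mem HL.
have [L' [HL' HyL']] := step HL H1 H2 HxL HyU Hxy HyL.
by apply: Hng'; exists L'.
Qed.

Lemma reach_prefix s t L A w B : hp s t L -> L = rcons A w ++ B ->
  w \in Reach ends s (size A).
Proof.
case=> Hs Hu _ HL _ HLe.
move: Hs Hu HL; rewrite {}HLe; case: A => [|z A].
  move=> _ _ /= [->]; apply/imsetP; exists (s, s) => //; by rewrite /= inE.
move=> Hs Hu [Hz]; rewrite Hz in Hs Hu; rewrite [rcons _ _]/= /= in Hs.
have := reach_path (x := s) (r := rcons A w).
rewrite last_rcons size_rcons; apply.
  by move: Hs; rewrite cat_path => /andP[].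
apply: subseq_uniq Hu; exact: prefix_subseq.
Qed.

Fixpoint Ball s h : {set V} :=
  match h with 0 => Reach ends s 0 | h'.+1 => Ball s h' :|: Reach ends s h'.+1 end.

Lemma ball_card s h : #|Ball s h| <= expn 2 h.+2.
Proof.
elim: h => [|h IH] /=.
  by apply: leq_trans (reach_card s 0 Hcub) _.
apply: leq_trans (leq_card_setU _ _) _.
have -> : expn 2 h.+3 = expn 2 h.+2 + expn 2 h.+2 by rewrite expnS mul2n -addnn.
by apply: leq_add => //; apply: reach_card.
Qed.

Lemma ball_sub s h i w : i <= h -> w \in Reach ends s i -> w \in Ball s h.
Proof.
elim: h => [|h IH] Hi Hw /=.
  by move: Hi; rewrite leqn0 => /eqP Hi; rewrite -Hi.
rewrite inE; move: Hi; rewrite leq_eqVlt ltnS => /orP[/eqP Hi|Hi].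
  by rewrite -Hi Hw orbT.
by rewrite IH.
Qed.

Lemma nat_max (P : nat -> Prop) N : (exists n, P n) -> (forall n, P n -> n <= N) ->
  exists m, P m /\ forall n, P n -> n <= m.
Proof.
elim: N => [|N IH] [n Pn] Hb.
  exists n; split => // k Pk; have := Hb k Pk; have := Hb n Pn.
  by rewrite !leqn0 => /eqP -> /eqP ->.
case: (classic (P N.+1)) => HN; first by exists N.+1; split.
apply: IH; first by exists n.
move=> k Pk; have := Hb k Pk; rewrite leq_eqVlt ltnS => /orP[/eqP Hk|//].
by case: HN; rewrite -Hk.
Qed.

Lemma main_sec : exists p : seq V,
    is_path ends b1 p b2 /\
    all (fun v => v \in U) p /\
    (INR (path_length p) >=
       2 * log2 (INR #|U|) - 2 * log2 (log2 (INR #|U|)) - 8)%R.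
Proof.
have Hex : exists n, exists L, hp a1 a2 L /\ size L = n.
  by have [L HL] := init_path; exists (size L), L.
have Hbd : forall n, (exists L, hp a1 a2 L /\ size L = n) -> n <= #|V|.
  move=> n [L [[_ Hu _ _ _] <-]].
  by rewrite -(card_uniqP Hu); apply: max_card.
have [m [[Lm [HLm Hsz]] Hmax]] := nat_max Hex Hbd.
exists Lm; split; [|split].
- case: HLm => Hs Hu Ha HL Hl; split.
  + rewrite HL /= adjC adj1 /=; rewrite rcons_path; apply/andP; split.
      by move: Hs; rewrite HL.
    by move: Hl; rewrite HL /= => ->; exact: adj2.
  + rewrite /= rcons_uniq Hu andbT mem_rcons inE negb_or; rewrite -andbA; apply/and3P; split.
    * exact: b12.
    * by apply/negP => Hb; move/allP: Ha => /(_ _ Hb); apply/negP; exact: b1U.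
    * by apply/negP => Hb; move/allP: Ha => /(_ _ Hb); apply/negP; exact: b2U.
- by case: HLm.
- apply: real_bound.
    by apply/card_gt0P; exists a1; exact: a1U.
  set h := m %/ 2.
  have HU : U \subset Ball a1 h :|: Ball a2 h.
    apply/subsetP => w HwU.
    have [L [HL HwL]] := all_good HwU.
    have HLs : size L <= m by apply: Hmax; exists L.
    have [A [B HLe]] := split_at HwL.
    have H1 := reach_prefix HL HLe.
    have HLr : rev L = rcons (rev B) w ++ rev A.
      by rewrite HLe rev_cat rev_rcons cat_rcons.
    have H2 := reach_prefix (hp_rev HL) HLr.
    rewrite size_rev in H2.
    have Hsum : size A + size B < m.
      by move: HLs; rewrite HLe size_cat size_rcons addSn.
    rewrite inE; have : (size A <= h) || (size B <= h) by apply/orP; rewrite /h; lia.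
    case/orP => Hi.
      by rewrite (ball_sub Hi H1).
    by rewrite (ball_sub Hi H2) orbT.
  have HcU : #|U| <= expn 2 h.+3.
    apply: leq_trans (subset_leq_card HU) _.
    apply: leq_trans (leq_card_setU _ _) _.
    have -> : expn 2 h.+3 = expn 2 h.+2 + expn 2 h.+2 by rewrite expnS mul2n -addnn.
    by apply: leq_add; apply: ball_card.
  apply: leq_trans (leq_mul HcU HcU) _.
  rewrite -expnD; apply: leq_pexp2l => //.
  rewrite /path_length Hsz /h; lia.
Qed.
End Pen.

Theorem lemma15 (V E : finType) (ends : E -> V * V) (U : {set V}) (e1 e2 : E) :
  loopless ends -> cubic ends -> two_connected ends ->
  e1 != e2 -> cutset ends U = [set e1; e2] ->
  exists p : seq V,
    is_path ends (outer_end ends U e1) p (outer_end ends U e2) /\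
    all (fun v => v \in U) p /\
    (INR (path_length p) >=
       2 * log2 (INR #|U|) - 2 * log2 (log2 (INR #|U|)) - 8)%R.
Proof.
move=> Hll Hc H2 _ Hcut.
exact: (main_sec Hll Hc H2 Hcut).
Qed.
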